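(* Let $\mathbb{F}_q$ be a finite field, $n\ge1$, and $C\le\mathbb{F}_q^n$ a linear code. Suppose there exists a regular subgroup $G$ of $S_n$ having a coprime cyclic decomposition and such that $\langle G, C_{S_n}(G)\rangle\le\mathrm{PAut}(C)$. Then $C$ is a cyclic group code.
   Context: $\mathcal{B}=\{e_1,\dots,e_n\}$ is the standard basis of $\mathbb{F}_q^n$; $\sigma\in S_n$ acts by $\sigma(\sum a_ie_i)=\sum a_ie_{\sigma(i)}$ and $\mathrm{PAut}(C)=\{\sigma\in S_n:\sigma(C)=C\}$. A subgroup of $S_n$ is regular if it has order $n$ and acts transitively on $\{1,\dots,n\}$; $C_{S_n}(G)$ is the centralizer of $G$ in $S_n$. A finite group $G$ has a coprime cyclic decomposition if there exist cyclic subgroups $A,B\le G$ with $\gcd(|A|,|B|)=1$ and $G=AB=\{ab:a\in A,b\in B\}$. For a finite group $H$ of order $n$, $C$ is an $H$-code if there is a bijection $\phi:\mathcal{B}\to H$ whose $\mathbb{F}_q$-linear extension $\tilde\phi:\mathbb{F}_q^n\to\mathbb{F}_q[H]$ maps $C$ onto a two-sided ideal of $\mathbb{F}_q[H]$; $C$ is a cyclic group code if it is an $H$-code for some cyclic group $H$. *)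

(* Defs.v *)
From HB Require Import structures.
From mathcomp Require Import all_boot all_order all_algebra all_fingroup all_solvable all_field.
Set Implicit Arguments. Unset Strict Implicit. Unset Printing Implicit Defensive.
Import GRing.Theory.
Local Open Scope ring_scope.
Local Open Scope group_scope.

(* Coordinate permutation action: s (sum a_i e_i) = sum a_i e_(s i),
   i.e. (s v)_j = v_(s^-1 j). *)
Definition permv (F : fieldType) (n : nat) (s : 'S_n) (v : 'rV[F]_n) : 'rV[F]_n :=
  \row_j v 0 ((s^-1)%g j).

Definition PAut (F : finFieldType) (n : nat) (C : {vspace 'rV[F]_n}) : {set 'S_n} :=
  [set s : 'S_n | [forall v : 'rV[F]_n,
      (v \in C) == [exists w : 'rV[F]_n, (w \in C) && (permv s w == v)]]].

Definition regular_subgroup (n : nat) (G : {group 'S_n}) : Prop :=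
  #|G| = n /\ [transitive G, on [set: 'I_n] | 'P].

Definition coprime_cyclic_decomposition (gT : finGroupType) (G : {group gT}) : Prop :=
  exists (A B : {group gT}), [/\ (A \subset G) && (B \subset G), cyclic A, cyclic B,
     coprime #|A| #|B| & ((A * B)%g = G :> {set gT})].

(* Group algebra F[H], for H the whole finite group gT: functions gT -> F
   with convolution product. *)
Definition galg_mul (F : fieldType) (gT : finGroupType) (a b : {ffun gT -> F})
  : {ffun gT -> F} :=
  [ffun g => \sum_(x : gT) a x * b (x^-1 * g)%g].

Definition two_sided_ideal (F : fieldType) (gT : finGroupType)
  (I : {ffun gT -> F} -> Prop) : Prop :=
  [/\ I 0, (forall a b, I a -> I b -> I (a - b)),
      (forall r a, I a -> I (galg_mul r a)) &
      (forall r a, I a -> I (galg_mul a r))].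

(* C is an H-code (H = the group gT): there is a bijection phi from the
   basis {e_i} (indexed by 'I_n) to H whose linear extension maps C onto a
   two-sided ideal of F[H].  The linear extension sends v = sum v_i e_i to
   sum v_i phi(i), i.e. to the function h |-> v_(phi^-1 h). *)
Definition group_code (F : finFieldType) (n : nat) (C : {vspace 'rV[F]_n})
  (gT : finGroupType) : Prop :=
  #|gT| = n /\
  exists phi : 'I_n -> gT, bijective phi /\
    two_sided_ideal (fun f : {ffun gT -> F} =>
      exists2 v : 'rV[F]_n, v \in C & forall i, f (phi i) = v 0 i).

Definition cyclic_group_code (F : finFieldType) (n : nat) (C : {vspace 'rV[F]_n})
  : Prop :=
  exists gT : finGroupType, cyclic [set: gT] /\ group_code C gT.

(* Main.v *)
Require Import Defs.
From HB Require Import structures.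
From mathcomp Require Import all_boot all_order all_algebra all_fingroup all_solvable all_field.
Set Implicit Arguments. Unset Strict Implicit. Unset Printing Implicit Defensive.
Import GRing.Theory.
Local Open Scope ring_scope.

Lemma galg_mulC (F : fieldType) (gT : finGroupType) (a b : {ffun gT -> F}) :
  abelian [set: gT] -> galg_mul a b = galg_mul b a.
Proof.
move=> ab; apply/ffunP => g; rewrite !ffunE.
have hinj : injective (fun y : gT => (g * y^-1)%g).
  by move=> y1 y2 /mulgI /invg_inj.
rewrite (reindex_inj hinj) /=; apply: eq_bigr => y _.
have cg : commute g (y^-1)%g.
  have h1 := centsP ab g (in_setT g).
  exact: h1 (y^-1)%g (in_setT _).
rewrite invMg invgK -mulgA mulVg mulg1 GRing.mulrC; congr (_ * _)%R.
by rewrite cg.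
Qed.
Lemma PAut_mem (F : finFieldType) (n : nat) (C : {vspace 'rV[F]_n}) s v :
  s \in PAut C -> v \in C -> permv s v \in C.
Proof.
rewrite inE => /forallP /(_ (permv s v)) /eqP ->; move=> vC.
by apply/existsP; exists v; rewrite vC eqxx.
Qed.

Lemma code_of_K (F : finFieldType) (n : nat) (C : {vspace 'rV[F]_n})
  (K : {group 'S_n}) (o : 'I_n) :
  cyclic K -> K \subset PAut C -> (forall j, exists2 x, x \in K & x o = j) ->
  cyclic_group_code C.
Proof.
move=> cK sKP trK.
have abK := cyclic_abelian cK.
have comK : {in K &, forall x y, commute x y}.
  by move=> x y xK yK; exact: (centsP abK x xK y yK).
pose gT := [subg K].
exists (FinGroup.clone _ gT).
split; first by rewrite -(isog_cyclic (isog_subg K)).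
pose psi := fun u : gT => sgval u o.
have psi_inj : injective psi.
  move=> u w; rewrite /psi => e.
  apply: subg_inj.
  have uK := subgP u; have wK := subgP w.
  set x := sgval u in e uK *; set y := sgval w in e wK *.
  have zo : (x * y^-1)%g o = o by rewrite permM e -permM mulgV perm1.
  have : (x * y^-1)%g = 1%g.
    apply/permP => j; have [z zK <-] := trK j.
    have xyK : (x * y^-1)%g \in K by rewrite groupM ?groupV.
    by rewrite perm1 -permM -(comK _ _ xyK zK) permM zo.
  by move/eqP; rewrite mulg_eq1 => /eqP; rewrite invgK.
have psi_sur : forall j, exists u, psi u = j.
  move=> j; have [x xK <-] := trK j; exists (subg K x).
  by rewrite /psi subgK.
pose phi := fun j => odflt 1%g [pick u | psi u == j].
have psiphi : forall j, psi (phi j) = j.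
  move=> j; rewrite /phi; case: pickP => [u /eqP //|].
  by have [u <-] := psi_sur j => /(_ u); rewrite eqxx.
have phipsi : forall u, phi (psi u) = u by move=> u; apply: psi_inj; rewrite psiphi.
have bphi : bijective phi by exists psi.
split; first by rewrite -(bij_eq_card bphi) card_ord.
exists phi; split => //.
have sgM : forall u w : gT, sgval (u * w)%g = (sgval u * sgval w)%g by [].
have sgV : forall u : gT, sgval (u^-1)%g = (sgval u)^-1%g by [].
have fv : forall (f : {ffun gT -> F}) (v : 'rV[F]_n), (forall i, f (phi i) = v 0 i) ->
   forall u, f u = v 0 (psi u).
  by move=> f v e u; rewrite -{1}(phipsi u) e.
have abT : abelian [set: gT] by rewrite -(isog_abelian (isog_subg K)).
have left : forall r a : {ffun gT -> F},
    (exists2 v, v \in C & forall i, a (phi i) = v 0 i) ->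
    (exists2 v, v \in C & forall i, galg_mul r a (phi i) = v 0 i).
  move=> r a [v vC ev].
  exists (\sum_(x : gT) r x *: permv (sgval x) v)%R.
    apply: memv_suml => x _; apply: memvZ; apply: PAut_mem vC.
    exact: (subsetP sKP _ (subgP x)).
  move=> i; rewrite ffunE summxE; apply: eq_bigr => x _.
  rewrite (fv a v ev) /psi sgM sgV !mxE permM.
  have pK := subgP (phi i); have xK := subgP x.
  rewrite -permM (comK _ _ (groupVr xK) pK) permM.
  by have := psiphi i; rewrite /psi => ->.
split.
- by exists 0%R; [exact: mem0v | move=> i; rewrite !ffunE mxE].
- move=> a b [v vC ev] [w wC ew]; exists (v - w)%R; first exact: memvB.
  by move=> i; rewrite !ffunE ev ew !mxE.
- exact: left.
- by move=> r a Ia; rewrite galg_mulC //; apply: left.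
Qed.

Theorem theorem3p1 (F : finFieldType) (n : nat) (C : {vspace 'rV[F]_n}) :
  (0 < n)%N ->
  (exists G : {group 'S_n},
      [/\ regular_subgroup G, coprime_cyclic_decomposition G &
          (G <*> 'C(G))%g \subset PAut C]) ->
  cyclic_group_code C.
Proof.
move=> n0 [G [[cardG trG] [A [B [/andP [sAG sBG] cA cB coAB defG]]] sGP]].
pose o := Ordinal n0.
have orbG : orbit 'P G o = [set: 'I_n] := atransP trG o (in_setT o).
have hG : forall j, exists2 g, g \in G & g o = j.
  move=> j; have : j \in orbit 'P G o by rewrite orbG inE.
  by case/imsetP => g gG ->; exists g.
have injG : {in G &, injective (fun g : 'S_n => g o)}.
  apply/imset_injP.
  have -> : [set (fun g : 'S_n => g o) g | g in G] = orbit 'P G o.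
    by [] || (apply: eq_imset => g; rewrite /= apermE).
  by rewrite orbG cardsT card_ord cardG.
pose h := fun j => odflt 1%g [pick g in G | g o == j].
have hP : forall j, h j \in G /\ h j o = j.
  move=> j; rewrite /h; case: pickP => [g /andP [gG /eqP] //|].
  by have [g gG <-] := hG j => /(_ g); rewrite gG eqxx.
have hU : forall g, g \in G -> h (g o) = g.
  by move=> g gG; have [hg e] := hP (g o); apply: injG.
have [a defA] := cyclicP cA; have [b defB] := cyclicP cB.
have aG : a \in G by rewrite -cycle_subG -defA.
have bG : b \in G by rewrite -cycle_subG -defB.
pose f := fun j => (b * h j)%g o.
have f_inj : injective f.
  move=> j1 j2; rewrite /f => e.
  have [h1G e1] := hP j1; have [h2G e2] := hP j2.
  have := injG _ _ (groupM bG h1G) (groupM bG h2G) e.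
  by move/mulgI => e12; rewrite -e1 -e2 e12.
pose lam := perm f_inj.
have lamC : lam \in 'C(G)%g.
  apply/centP => y yG; apply/permP => j.
  rewrite !permM !permE /f permM.
  have [hjG ehj] := hP j.
  have -> : h (y j) = (h j * y)%g.
    by rewrite -(hU _ (groupM hjG yG)) permM ehj.
  by rewrite !permM.
have lamX : forall m j, (lam ^+ m)%g j = (b ^+ m * h j)%g o.
  elim=> [|m IH] j; first by rewrite !expg0 mul1g perm1; have [_ ->] := hP j.
  rewrite expgSr permM IH permE /f hU; last first.
    by rewrite groupM ?groupX //; case: (hP j).
  by rewrite mulgA -expgS.
pose k := (a * lam)%g.
have cal : commute a lam by apply/esym; exact: (centP lamC a aG).
have kG : k \in (G <*> 'C(G))%g.
  by rewrite /k groupM //; [apply: (subsetP (joing_subl _ _)) | apply: (subsetP (joing_subr _ _))].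
apply: (@code_of_K F n C <[k]>%G o (cycle_cyclic k)).
  by apply: subset_trans sGP; rewrite cycle_subG.
move=> j; have [g gG <-] := hG j.
have : (g^-1)%g \in (A * B)%g by rewrite defG groupV.
case/mulsgP => x y xA yB eg.
have eg' : g = (y^-1 * x^-1)%g by rewrite -invMg -eg invgK.
have : (x^-1)%g \in <[a]>%g by rewrite -defA groupV.
case/cycleP => m1 em1.
have : (y^-1)%g \in <[b]>%g by rewrite -defB groupV.
case/cycleP => m2 em2.
have co : coprime #[a]%g #[b]%g by rewrite /order -defA -defB.
pose m := chinese #[a]%g #[b]%g m1 m2.
exists (k ^+ m)%g; first exact: mem_cycle.
rewrite expgMn // permM lamX hU ?groupX // eg' em1 em2.
by rewrite -(expg_mod_order a m) -(expg_mod_order b m) /m chinese_modl // chinese_modr // !expg_mod_order.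
Qed.
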